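(* For positive integers $a<b\le c$, $$S(bac;t,x)=\frac{t^3x^{a+b+c}\bigl(1+tx^c(1+x+\cdots+x^{b-a-1})\bigr)}{(1-x-tx)\,\psi_{a,b,c}(t,x)+t^3x^{a+b+c}\bigl(1+tx^c(1+x+\cdots+x^{b-a-1})\bigr)},$$ where $$\psi_{a,b,c}(t,x)=(1-x)^2+tx^c(1-x)+t^2x^{a+c}+t^3x^{a+2c}(1+x+\cdots+x^{b-a-1}).$$
   Context: $\mathbb{P}^*$ is the set of finite words over the positive integers (usual order); $bac$ denotes the three-letter word with letters $b,a,c$. For $w=w_1\ldots w_n$, $\mathrm{wt}(w)=t^nx^{\sum_i w_i}$. An embedding of $u$ into $w$ is a string of $|u|$ consecutive letters of $w$ whose $i$-th letter is $\ge$ the $i$-th letter of $u$ for every $i$. $\mathcal{S}(u)$ is the set of words $w$ admitting an embedding of $u$ such that the last $|u|$ letters of $w$ form the only embedding of $u$ into $w$, and $S(u;t,x)=\sum_{w\in\mathcal{S}(u)}\mathrm{wt}(w)$. *)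

(* Defs.v *)
From HB Require Import structures.
From mathcomp Require Import all_boot all_order all_algebra.
Set Implicit Arguments. Unset Strict Implicit. Unset Printing Implicit Defensive.
Import GRing.Theory.

(* Words over positive integers are represented as seq nat (letters >= 1). *)

Definition embeds_at (u w : seq nat) (i : nat) : bool :=
  (i + size u <= size w) &&
  all (fun j => nth 0 u j <= nth 0 w (i + j)) (iota 0 (size u)).

Definition inS (u w : seq nat) : bool :=
  (size u <= size w) &&
  all (fun i => embeds_at u w i == (i == size w - size u)) (iota 0 (size w).+1).

(* Coefficient of t^n x^m in S(u;t,x): number of words in S(u) of length n
   and letter sum m (letters are positive, hence at most m). *)
Definition Scoef (u : seq nat) (n m : nat) : nat :=
  #|[set w : n.-tuple 'I_m.+1 |
      [&& all (fun i : 'I_m.+1 => 0 < (i : nat)) w,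
          sumn (map val w) == m &
          inS u (map val w)]]|.

Local Open Scope ring_scope.

(* Bivariate polynomials in t, x with integer coefficients:
   {poly {poly int}}, outer variable t, inner variable x. *)
Definition tv : {poly {poly int}} := 'X.
Definition xv : {poly {poly int}} := ('X : {poly int})%:P.

Definition geomx (k : nat) : {poly {poly int}} := \sum_(i < k) xv ^+ i.

Definition psi (a b c : nat) : {poly {poly int}} :=
  (1 - xv) ^+ 2 + tv * xv ^+ c * (1 - xv) + tv ^+ 2 * xv ^+ (a + c)%N
  + tv ^+ 3 * xv ^+ (a + 2 * c)%N * geomx (b - a).

Definition numS (a b c : nat) : {poly {poly int}} :=
  tv ^+ 3 * xv ^+ (a + b + c)%N * (1 + tv * xv ^+ c * geomx (b - a)).

Definition denS (a b c : nat) : {poly {poly int}} :=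
  (1 - xv - tv * xv) * psi a b c + numS a b c.

Definition coef2 (p : {poly {poly int}}) (i j : nat) : int := (p`_i)`_j.

(* Main.v *)
Require Import Defs.
From HB Require Import structures.
From mathcomp Require Import all_boot all_order all_algebra.
From Stdlib Require Import Ring.
Import GRing.Theory.

Section Abs.
Variables (R : Type) (z o : R) (ad mu : R -> R -> R) (op : R -> R).
Hypothesis Rth : ring_theory z o ad mu (fun x y => ad x (op y)) op (@eq R).
Add Ring AR : Rth.
Variable Z : R -> Prop.
Hypotheses (Z0 : Z z) (Zad : forall p q, Z p -> Z q -> Z (ad p q))
  (Zmu : forall r p, Z p -> Z (mu r p)).

Declare Scope A_scope.
Local Notation "p + q" := (ad p q) : A_scope.
Local Notation "p * q" := (mu p q) : A_scope.
Local Notation "- p" := (op p) : A_scope.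
Local Notation "p - q" := (ad p (op q)) : A_scope.
Local Notation "1" := o : A_scope.
Local Notation "0" := z : A_scope.
Local Open Scope A_scope.

Definition eqv p q := Z (p - q).

Lemma Zeq p q : p = q -> Z p -> Z q.
Proof. intros ->; auto. Qed.
Lemma Zsub p q : Z p -> Z q -> Z (p - q).
Proof. intros Hp Hq. apply (Zeq (p + (0 - 1) * q)); [ring|]. apply Zad; auto. Qed.
Lemma eqvR p q p' q' : p = p' -> q = q' -> eqv p q -> eqv p' q'.
Proof. intros -> ->; auto. Qed.
Lemma eqv_eq p q : p = q -> eqv p q.
Proof. intros ->. unfold eqv. apply (Zeq 0); [ring|exact Z0]. Qed.
Lemma eqv_sym p q : eqv p q -> eqv q p.
Proof. unfold eqv; intros H. apply (Zeq ((0 - 1) * (p - q))); [ring|auto]. Qed.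
Lemma eqv_trans p q r : eqv p q -> eqv q r -> eqv p r.
Proof. unfold eqv; intros H1 H2. apply (Zeq ((p - q) + (q - r))); [ring|auto]. Qed.
Lemma eqv_add p q p' q' : eqv p p' -> eqv q q' -> eqv (p + q) (p' + q').
Proof. unfold eqv; intros H1 H2. apply (Zeq ((p - p') + (q - q'))); [ring|auto]. Qed.
Lemma eqv_sub p q p' q' : eqv p p' -> eqv q q' -> eqv (p - q) (p' - q').
Proof. unfold eqv; intros H1 H2. apply (Zeq ((p - p') - (q - q'))); [ring|]. apply Zsub; auto. Qed.
Lemma eqv_mul p q p' q' : eqv p p' -> eqv q q' -> eqv (p * q) (p' * q').
Proof. unfold eqv; intros H1 H2. apply (Zeq (q * (p - p') + p' * (q - q'))); [ring|auto]. Qed.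
Lemma canc u v q : eqv (u * v) 1 -> eqv (u * q) 0 -> eqv q 0.
Proof. unfold eqv; intros H1 H2. apply (Zeq (v * (u * q - 0) - q * (u * v - 1))); [ring|].
apply Zsub; auto. Qed.

Variables x t xa xc xba gm S C Q D L1 La Lb Lc v1 w1 : R.
Hypotheses (Hv : eqv ((1 - x) * v1) 1) (Hw : eqv ((1 + Lc) * w1) 1)
  (Hgm : (1 - x) * gm = 1 - xba)
  (F1 : eqv ((1 - x) * L1) (t * x)) (Fa : eqv ((1 - x) * La) (t * xa))
  (Fb : eqv ((1 - x) * Lb) (t * (xa * xba))) (Fc : eqv ((1 - x) * Lc) (t * xc))
  (E1 : eqv (S + Lb * Q) (Lb * (La * Lc) + L1 * S))
  (E2 : eqv (C + Lc * Q) (Lc * (La * Lc) + Lc * S))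
  (E3 : eqv (Q + Lb * D) (Lb * (Lc * Lc) + La * C))
  (E4 : eqv (D + Lc * D) (Lc * (Lc * Lc) + Lc * C)).

Let K := La + La * Lc - Lb * Lc.
Let Den' := (1 - L1) * (1 + Lc + Lc * K) + Lb * Lc * K.
Let Num' := Lb * Lc * K.
Let kap := t * xa * (1 + t * xc * gm).

Lemma stepA : eqv (S * Den') Num'.
Proof.
pose (e1 := (S + Lb * Q) - (Lb * (La * Lc) + L1 * S)).
pose (e2 := (C + Lc * Q) - (Lc * (La * Lc) + Lc * S)).
pose (e3 := (Q + Lb * D) - (Lb * (Lc * Lc) + La * C)).
pose (e4 := (D + Lc * D) - (Lc * (Lc * Lc) + Lc * C)).
assert (Z1 : Z e1) by exact E1. assert (Z2 : Z e2) by exact E2.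
assert (Z3 : Z e3) by exact E3. assert (Z4 : Z e4) by exact E4.
assert (HA : eqv ((1 + Lc) * (S * Den' - Num')) 0).
{
  unfold eqv.
  apply (Zeq ((1 + Lc + Lc * K) * ((1 + Lc) * e1 - Lb * ((1 + Lc) * e3 - Lb * e4))
     - Lb * K * ((1 + Lc) * e2 - Lc * ((1 + Lc) * e3 - Lb * e4)))).
    unfold e1, e2, e3, e4, Den', Num', K; ring.
  clearbody e1 e2 e3 e4. repeat (apply Zsub || apply Zmu); assumption.
}
pose proof (canc _ _ _ Hw HA) as HB.
unfold eqv in HB |- *.
apply (Zeq (S * Den' - Num' - 0)); [ring|exact HB].
Qed.

Lemma stepB : eqv ((1 - x) * K) kap.
Proof.
assert (H1 : eqv ((1 - x) * ((1 - x) * K)) ((1 - x) * kap)).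
{
  apply (eqvR ((1 - x) * ((1 - x) * La) + ((1 - x) * La) * ((1 - x) * Lc)
                 - ((1 - x) * Lb) * ((1 - x) * Lc)) ((1 - x) * (t * xa) + (t * xa) * (t * xc) - (t * (xa * xba)) * (t * xc)) _ _).
  - unfold K; ring.
  - unfold kap. transitivity ((1 - x) * (t * xa) + t * xa * (t * xc) * ((1 - x) * gm)); [|ring].
    rewrite Hgm. ring.
  - apply eqv_sub; [apply eqv_add; [apply eqv_mul; [apply eqv_eq; reflexivity| exact Fa] | apply eqv_mul; assumption] | apply eqv_mul; assumption].
}
assert (H2 : eqv ((1 - x) * ((1 - x) * K - kap)) 0).
{
  unfold eqv in H1 |- *.
  apply (Zeq ((1 - x) * ((1 - x) * K) - (1 - x) * kap)); [ring|exact H1].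
}
pose proof (canc _ _ _ Hv H2) as H3.
unfold eqv in H3 |- *. apply (Zeq ((1 - x) * K - kap - 0)); [ring|exact H3].
Qed.

Lemma abs_main DEN NUM :
  DEN = (1 - x - t * x) * ((1 - x) * (1 - x) + t * xc * (1 - x) + t * t * (xa * xc)
          + t * t * t * (xa * xc * xc) * gm) + NUM ->
  NUM = t * t * t * (xa * (xa * xba) * xc) * (1 + t * xc * gm) ->
  eqv (DEN * S) NUM.
Proof.
intros HD HN.
assert (N3 : eqv ((1 - x) * (1 - x) * (1 - x) * Num') NUM).
{
  apply (eqvR (((1 - x) * Lb) * ((1 - x) * Lc) * ((1 - x) * K)) ((t * (xa * xba)) * (t * xc) * kap) _ _).
  - unfold Num'; ring.
  - rewrite HN; unfold kap; ring.
  - apply eqv_mul; [apply eqv_mul; assumption| apply stepB].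
}
assert (D3 : eqv ((1 - x) * (1 - x) * (1 - x) * Den') DEN).
{
  apply (eqvR (((1 - x) - (1 - x) * L1) * ((1 - x) * (1 - x) + (1 - x) * ((1 - x) * Lc)
                  + ((1 - x) * Lc) * ((1 - x) * K)) + (1 - x) * (1 - x) * (1 - x) * Num') (((1 - x) - t * x) * ((1 - x) * (1 - x) + (1 - x) * (t * xc) + (t * xc) * kap)
                  + NUM) _ _).
  - unfold Den', Num'; ring.
  - rewrite HD; unfold kap; ring.
  - apply eqv_add; [|exact N3].
    apply eqv_mul; [apply eqv_sub; [apply eqv_eq; reflexivity|exact F1]|].
    apply eqv_add; [apply eqv_add; [apply eqv_eq; reflexivity|apply eqv_mul; [apply eqv_eq; reflexivity|exact Fc]]|].
    apply eqv_mul; [exact Fc|apply stepB].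
}
apply (eqv_trans _ ((1 - x) * (1 - x) * (1 - x) * Den' * S)) .
  apply eqv_mul; [apply eqv_sym; exact D3| apply eqv_eq; reflexivity].
apply (eqv_trans _ ((1 - x) * (1 - x) * (1 - x) * Num')); [|exact N3].
apply (eqvR ((1 - x) * (1 - x) * (1 - x) * (S * Den')) ((1 - x) * (1 - x) * (1 - x) * Num') _ _);
  [ring|reflexivity|].
apply eqv_mul; [apply eqv_eq; reflexivity|exact stepA].
Qed.
End Abs.

Fixpoint wl (n m : nat) : seq (seq nat) :=
  match n with
  | 0 => if m == 0 then [:: [::]] else [::]
  | n'.+1 => flatten [seq [seq y :: w | w <- wl n' (m - y)] | y <- iota 1 m]
  end.

Lemma wlP n m w :
  (w \in wl n m) = [&& size w == n, all (fun y => 0 < y) w & sumn w == m].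
Proof.
elim: n m w => [|n IH] m w /=.
  case: w => [|y w] /=; case: eqP => Hm; rewrite ?Hm //= ?inE //.
  by case: (0 =P m) => // H; case: Hm.
apply/idP/idP.
  case/allpairsPdep => y [w' [Hy Hw' ->]]; move: Hy.
  rewrite mem_iota => /andP [H1 H2].
  move: Hw'; rewrite IH => /and3P [/eqP Hs H3 /eqP H4] /=.
  rewrite Hs eqxx H1 H3 H4 /= subnKC //.
case: w => [|y w] /=; first by [].
case/and3P => [Hs /andP [Hy Ha] /eqP Hsum]; rewrite eqSS in Hs.
apply/allpairsPdep; exists y, w; split => //.
  by rewrite mem_iota Hy add1n ltnS -Hsum leq_addr.
by rewrite IH Hs Ha -Hsum addKn eqxx.
Qed.

Lemma uniq_flat (F : nat -> seq (seq nat)) s :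
  uniq s -> (forall y, uniq (F y)) ->
  (forall y w, w \in F y -> head 0 w = y) ->
  uniq (flatten [seq F y | y <- s]).
Proof.
move=> Hs HF Hh; elim: s Hs => [|y s IH] //= /andP [Hy Hs].
rewrite cat_uniq HF IH // andbT.
apply/hasPn => w /flatten_mapP [y' Hy' Hw]; apply/negP => Hw2.
move: (Hh _ _ Hw) (Hh _ _ Hw2) => E1 E2.
by move: Hy; rewrite -E2 E1 Hy'.
Qed.

Lemma wl_uniq n m : uniq (wl n m).
Proof.
elim: n m => [|n IH] m /=; first by case: (m == 0).
apply: uniq_flat; first exact: iota_uniq.
  move=> y; rewrite map_inj_uniq //; by move=> ? ? [].
by move=> y w /mapP [w' _ ->].
Qed.

Definition cnt (P : pred (seq nat)) n m := count P (wl n m).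

Lemma cntS P n m :
  cnt P n.+1 m = \sum_(y <- iota 1 m) cnt (fun w => P (y :: w)) n (m - y).
Proof.
rewrite /cnt /= count_flatten sumnE !big_map; apply: eq_bigr => y _.
by rewrite count_map.
Qed.

Definition sh (k : nat) (P : pred (seq nat)) : pred (seq nat) :=
  fun w => if w is y :: w' then (k <= y) && P w' else false.

Lemma cnt_sh k P n m : 0 < k ->
  cnt (sh k P) n.+1 m = \sum_(y < m.+1) (k <= y) * cnt P n (m - y).
Proof.
move=> Hk; rewrite cntS big_ord_recl /= leqNgt Hk /= mul0n add0n.
rewrite (iotaDl 1 0) big_map /index_iota.
rewrite -(subn0 m) -/(index_iota 0 m) big_mkord subn0.
apply: eq_bigr => i _; rewrite /cnt /bump /= add1n.
case: (k <= i.+1) => /=; first by rewrite mul1n.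
by rewrite mul0n count_pred0.
Qed.

Lemma cnt0 P m : cnt P 0 m = if m == 0 then P [::] : nat else 0.
Proof. by rewrite /cnt /=; case: (m == 0) => //=; rewrite addn0. Qed.

Lemma emb_cons u y w i : embeds_at u (y :: w) i.+1 = embeds_at u w i.
Proof.
rewrite /embeds_at /= addSn ltnS; congr (_ && _).

Qed.

Lemma emb_small u w i : size w < i + size u -> embeds_at u w i = false.
Proof. by rewrite /embeds_at ltnNge => /negbTE ->. Qed.

Lemma inS_cons (b a c y : nat) w :
  inS [:: b; a; c] (y :: w) =
  if size w == 2 then embeds_at [:: b; a; c] (y :: w) 0
  else (2 < size w) && inS [:: b; a; c] w && ~~ embeds_at [:: b; a; c] (y :: w) 0.
Proof.
have E : forall n, iota 0 n.+1 = 0 :: [seq i.+1 | i <- iota 0 n].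
  by move=> n; rewrite -(iotaDl 1 0).
rewrite /inS (_ : size [:: b; a; c] = 3) // (_ : size (y :: w) = (size w).+1) //.
rewrite E (_ : forall (p : pred nat) x s, all p (x :: s) = p x && all p s) // all_map.
case: (ltngtP (size w) 2) => Hs.
- by rewrite ltnS leqNgt Hs.
- rewrite ltnS (ltnW Hs) subSn // eqbF_neg [RHS]andbC !andTb; congr (_ && _).
  Show.
- rewrite Hs /= !emb_cons !(@emb_small _ w) ?Hs //.
  by case: (embeds_at _ _ 0).
Qed.

Lemma inS_size u w : inS u w -> size u <= size w.
Proof. by case/andP. Qed.

Section Pointwise.
Variables (a b c : nat).
Hypotheses (ha : 0 < a) (hab : a < b) (hbc : b <= c).
Definition u3 := [:: b; a; c].
Definition PS : pred (seq nat) := fun w => inS u3 w.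
Definition PC : pred (seq nat) := fun w => inS u3 w && (c <= nth 0 w 0).
Definition PQ : pred (seq nat) := fun w => [&& inS u3 w, a <= nth 0 w 0 & c <= nth 0 w 1].
Definition PD : pred (seq nat) := fun w => [&& inS u3 w, c <= nth 0 w 0 & c <= nth 0 w 1].
Definition emp : pred (seq nat) := fun w => nilp w.

Lemma cb z : (c <= z) ==> (b <= z).
Proof. by apply/implyP => H; exact: leq_trans hbc H. Qed.
Lemma ba z : (b <= z) ==> (a <= z).
Proof. by apply/implyP => H; exact: leq_trans (ltnW hab) H. Qed.

Ltac crunch :=
  repeat match goal with |- context [?m <= ?n] => case: (m <= n) end; done.

Ltac pw_tac :=
  let y := fresh "y" in
  let y0 := fresh "y0" in let y1 := fresh "y1" in let y2 := fresh "y2" in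
  let w' := fresh "w'" in let Hy := fresh "Hy" in let s := fresh "s" in
  case => [|y [|y0 [|y1 [|y2 w']]]] //= /andP [Hy _];
  rewrite /PS /PC /PQ /PD /sh /emp /u3 ?(inS_cons b a c y) /=;
  try (move: (inS [:: b; a; c] (y0 :: y1 :: y2 :: w')) => s);
  rewrite /inS /embeds_at /= ?Hy;
  move: (cb y) (ba y); try move: (cb y0) (ba y0); try move: (cb y1) (ba y1);
  try (case: s); crunch.

Lemma pw1 w : all (fun y => 0 < y) w ->
  PS w + sh b PQ w = sh b (sh a (sh c emp)) w + sh 1 PS w.
Proof. move: w; pw_tac. Qed.
Lemma pw2 w : all (fun y => 0 < y) w ->
  PC w + sh c PQ w = sh c (sh a (sh c emp)) w + sh c PS w.
Proof. move: w; pw_tac. Qed.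
Lemma pw3 w : all (fun y => 0 < y) w ->
  PQ w + sh b PD w = sh b (sh c (sh c emp)) w + sh a PC w.
Proof. move: w; pw_tac. Qed.
Lemma pw4 w : all (fun y => 0 < y) w ->
  PD w + sh c PD w = sh c (sh c (sh c emp)) w + sh c PC w.
Proof. move: w; pw_tac. Qed.
End Pointwise.

Lemma leq_sumn s y : y \in s -> y <= sumn s.
Proof.
elim: s => [|z s IH] //=; rewrite inE => /orP [/eqP ->|H]; first exact: leq_addr.
exact: leq_trans (IH H) (leq_addl _ _).
Qed.

Lemma Scoef_cnt u n m : Scoef u n m = cnt (inS u) n m.
Proof.
rewrite /Scoef cardE /cnt -size_filter.
set A := [set w : n.-tuple 'I_m.+1 | _].
pose f := fun w : n.-tuple 'I_m.+1 => map val w.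
have finj : injective f.
  by move=> w1 w2 /(inj_map val_inj) /val_inj.
have Hu : uniq (map f (enum A)) by rewrite map_inj_uniq // enum_uniq.
have Hm : map f (enum A) =i filter (inS u) (wl n m).
  move=> x; rewrite mem_filter wlP; apply/mapP/idP.
    case=> w; rewrite mem_enum inE => /and3P [Hpos /eqP Hs Hin] ->.
    by rewrite /f Hin size_map size_tuple eqxx all_map Hs eqxx andbT.
  case/andP => Hin /and3P [/eqP Hs Hpos /eqP Hsum].
  have Hle : all (fun y => y < m.+1) x.
    by apply/allP => y Hy; rewrite ltnS -Hsum; exact: leq_sumn.
  have Hsz : size (map (@inord m) x) == n by rewrite size_map Hs.
  have Ex : f (Tuple Hsz) = x.
    rewrite /f /= -map_comp; apply: map_id_in => y Hy /=.
    by apply: inordK; exact: (allP Hle).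
  exists (Tuple Hsz) => //.
  rewrite mem_enum inE -/(f _) Ex Hin Hsum eqxx andbT.
  rewrite andbT; apply/allP => i /mapP [y Hy ->]; rewrite inordK ?(allP Hpos) //; exact: (allP Hle).
rewrite -(size_map f (enum A)); apply: perm_size; apply: uniq_perm => //.
by apply: filter_uniq; apply: wl_uniq.
Qed.

Local Open Scope ring_scope.

Lemma coef2_poly (n1 n2 : nat) (E : nat -> nat -> int) i j :
  coef2 (\poly_(i < n1) \poly_(j < n2) E i j) i j =
  if ((i < n1) && (j < n2))%N then E i j else 0.
Proof.
rewrite /coef2 coef_poly; case: (i < n1)%N => /=; last by rewrite coef0.
by rewrite coef_poly.
Qed.

Lemma coef2M (p q : {poly {poly int}}) i j :
  coef2 (p * q) i j = \sum_(k < i.+1) \sum_(l < j.+1) coef2 p k l * coef2 q (i - k) (j - l).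
Proof. by rewrite /coef2 coefM coef_sum; apply: eq_bigr => k _; rewrite coefM. Qed.

Lemma xvX k : xv ^+ k = ('X^k)%:P.
Proof. by elim: k => [|k IH]; rewrite ?expr0 ?polyC1 // !exprS polyCM IH. Qed.

Lemma geo (R : comPzRingType) (y : R) n : (1 - y) * \sum_(i < n) y ^+ i = 1 - y ^+ n.
Proof. by rewrite -opprB mulNr -subrX1 opprB. Qed.

Section Trunc.
Variables N M : nat.

Definition tr (p : {poly {poly int}}) : {poly {poly int}} :=
  \poly_(i < N.+1) \poly_(j < M.+1) coef2 p i j.

Lemma coef2_tr p i j :
  coef2 (tr p) i j = if ((i <= N) && (j <= M))%N then coef2 p i j else 0.
Proof. by rewrite coef2_poly. Qed.

Lemma trP p q : (forall i j, (i <= N)%N -> (j <= M)%N -> coef2 p i j = coef2 q i j) ->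
  tr p = tr q.
Proof.
move=> H; apply/polyP => i; rewrite !coef_poly; case: ifP => // Hi.
apply/polyP => j; rewrite !coef_poly; case: ifP => // Hj; exact: H.
Qed.

Lemma trK p : tr (tr p) = tr p.
Proof. by apply: trP => i j Hi Hj; rewrite coef2_tr Hi Hj. Qed.

Lemma tr_mulr p q : tr (p * q) = tr (p * tr q).
Proof.
apply: trP => i j Hi Hj; rewrite !coef2M; apply: eq_bigr => k _; apply: eq_bigr => l _.
by rewrite coef2_tr (leq_trans (leq_subr _ _) Hi) (leq_trans (leq_subr _ _) Hj).
Qed.

Lemma tr_add p q : tr (p + q) = tr p + tr q.
Proof.
apply/polyP => i; rewrite coefD !coef_poly; case: ifP => _; last by rewrite addr0.
by apply/polyP => j; rewrite coefD !coef_poly; case: ifP => _; rewrite ?addr0 // /coef2 !coefD.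
Qed.

Lemma tr_opp p : tr (- p) = - tr p.
Proof.
apply/polyP => i; rewrite coefN !coef_poly; case: ifP => _; last by rewrite oppr0.
by apply/polyP => j; rewrite coefN !coef_poly; case: ifP => _; rewrite ?oppr0 // /coef2 !coefN.
Qed.

Lemma tr0 : tr 0 = 0.
Proof. by apply/polyP => i; rewrite coef_poly coef0; case: ifP => // _; apply/polyP => j;
  rewrite coef_poly /coef2 !coef0; case: ifP. Qed.

Definition Zt p := tr p = 0.

Lemma Zt0 : Zt 0. Proof. exact: tr0. Qed.
Lemma Zt_add p q : Zt p -> Zt q -> Zt (p + q).
Proof. by rewrite /Zt tr_add => -> ->; rewrite addr0. Qed.
Lemma Zt_mul r p : Zt p -> Zt (r * p).
Proof. by rewrite /Zt tr_mulr => ->; rewrite mulr0 tr0. Qed.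

Lemma eqvP p q : tr p = tr q -> Zt (p + - q).
Proof. by rewrite /Zt tr_add tr_opp => ->; rewrite subrr. Qed.

Definition G (P : pred (seq nat)) : {poly {poly int}} :=
  \poly_(i < N.+1) \poly_(j < M.+1) ((cnt P i j)%:Z : int).

Lemma coef2_G P i j :
  coef2 (G P) i j = if ((i <= N) && (j <= M))%N then (cnt P i j)%:Z else 0.
Proof. by rewrite coef2_poly. Qed.

Lemma trG P : tr (G P) = G P.
Proof.
apply/polyP => i; rewrite !coef_poly; case: ifP => // Hi.
apply/polyP => j; rewrite !coef_poly; case: ifP => // Hj.
by rewrite coef2_G; move: Hi Hj; rewrite !ltnS => -> ->.
Qed.

Definition Lk (k : nat) : {poly {poly int}} :=
  tv * (\poly_(j < M.+1) (((k <= j)%N)%:R : int))%:P.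

Lemma shiftG k P : (0 < k)%N -> tr (Lk k * G P) = G (sh k P).
Proof.
move=> Hk; rewrite -(trG (sh k P)); apply: trP => i j Hi Hj; rewrite coef2_G Hi Hj /=.
rewrite /Lk -mulrA /coef2 /tv coefXM.
case: i Hi => [|i] Hi /=.
  by rewrite coef0 cnt0; case: (j == 0%N).
rewrite coefCM coefM cnt_sh // -natz natr_sum; apply: eq_bigr => l _.
rewrite coef_poly ltnS (leq_trans (leq_ord l) Hj) natrM natz; congr (_ * _).
have := coef2_G P i (j - l); rewrite /coef2 => ->.
by rewrite (ltnW Hi) (leq_trans (leq_subr _ _) Hj) /= natz.
Qed.

Lemma trG_emp : tr 1 = G emp.
Proof.
rewrite -trG; apply: trP => i j Hi Hj; rewrite coef2_G Hi Hj /coef2 coef1.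
case: i Hi => [|i] Hi /=.
  by rewrite coef1 cnt0; case: (j == 0%N).
rewrite coef0 cntS big1 // => y _; rewrite /cnt /emp /=.
by elim: (wl _ _).
Qed.

Lemma coef2_tC (q : {poly int}) i j :
  coef2 (tv * q%:P) i j = if i == 1%N then q`_j else 0.
Proof.
rewrite /coef2 /tv coefXM; case: i => [|[|i]] /=; rewrite ?coef0 // coefC //.
by rewrite coef0.
Qed.

Lemma FL k : tr ((1 - xv) * Lk k) = tr (tv * xv ^+ k).
Proof.
apply: trP => i j Hi Hj.
rewrite /Lk mulrCA /xv xvX -polyC1 -polyCB -polyCM !coef2_tC.
case: (i == 1%N) => //.
rewrite mulrBl mul1r coefB coefXM coefXn !coef_poly ltnS Hj.
case: j Hj => [|j] Hj /=.
  by rewrite subr0 leqn0 eq_sym.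
rewrite ltnS (ltnW Hj).
case: (ltngtP k j.+1) => H.
- by move: H; rewrite ltnS => ->; rewrite subrr.
- by rewrite leqNgt (ltn_trans (ltnSn j) H) subrr.
- by rewrite H ltnn subr0.
Qed.

Lemma trXn_x : tr (xv ^+ M.+1) = 0.
Proof.
rewrite -tr0; apply: trP => i j Hi Hj.
rewrite xvX /coef2 coefC !coef0; case: eqP => _; rewrite ?coef0 // coefXn ltn_eqF //.
Qed.

Lemma trXn_t p : tr (tv ^+ N.+1 * p) = 0.
Proof.
rewrite -tr0; apply: trP => i j Hi Hj.
by rewrite /coef2 /tv coefXnM ltnS Hi !coef0.
Qed.

End Trunc.

Definition PP := {poly {poly int}}.
Lemma PRth : @ring_theory PP 0 1 +%R *%R (fun x y => x + - y) -%R eq.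
Proof.
constructor=> //; [exact: add0r|exact: addrC|exact: addrA|exact: mul1r|exact: mulrC|exact: mulrA|exact: mulrDl|exact: subrr].
Qed.

Lemma count_add4 (P1 P2 P3 P4 : pred (seq nat)) s :
  (forall w, w \in s -> P1 w + P2 w = P3 w + P4 w)%N ->
  (count P1 s + count P2 s = count P3 s + count P4 s)%N.
Proof.
elim: s => [|w s IH] H //=.
rewrite [LHS]addnACA [RHS]addnACA H ?mem_head // IH // => v Hv.
by apply: H; rewrite inE Hv orbT.
Qed.

Lemma G_add4 N M (P1 P2 P3 P4 : pred (seq nat)) :
  (forall w, all (fun y => 0 < y)%N w -> P1 w + P2 w = P3 w + P4 w)%N ->
  G N M P1 + G N M P2 = G N M P3 + G N M P4.
Proof.
move=> H.
have Hc : forall i j, (cnt P1 i j + cnt P2 i j = cnt P3 i j + cnt P4 i j)%N.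
  move=> i j; apply: count_add4 => w; rewrite wlP; case/and3P => _ Hp _; exact: H.
have ext : forall p q : {poly {poly int}}, (forall i j, coef2 p i j = coef2 q i j) -> p = q.
  by move=> p q E; apply/polyP => i; apply/polyP => j; exact: E.
apply: ext => i j; rewrite /coef2 !coefD -!/(coef2 _ i j) !coef2_G.
by case: ifP => _; rewrite ?addr0 // -!PoszD Hc.
Qed.

Lemma base3 N M k1 k2 k3 : (0 < k1)%N -> (0 < k2)%N -> (0 < k3)%N ->
  tr N M (Lk M k1 * (Lk M k2 * Lk M k3)) = G N M (sh k1 (sh k2 (sh k3 emp))).
Proof.
move=> H1 H2 H3.
have h3 : tr N M (Lk M k3) = G N M (sh k3 emp).
  by rewrite -[Lk M k3]mulr1 tr_mulr trG_emp shiftG.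
have h2 : tr N M (Lk M k2 * Lk M k3) = G N M (sh k2 (sh k3 emp)).
  by rewrite tr_mulr h3 shiftG.
by rewrite tr_mulr h2 shiftG.
Qed.

Theorem theorem5 (a b c : nat) (ha : (0 < a)%N) (hab : (a < b)%N) (hbc : (b <= c)%N) :
  forall n m : nat,
    \sum_(i < n.+1) \sum_(j < m.+1)
        coef2 (denS a b c) i j * (Scoef [:: b; a; c] (n - i) (m - j))%:Z
    = coef2 (numS a b c) n m.
Proof.
move=> n m.
have hb : (0 < b)%N by exact: leq_ltn_trans (leq0n a) hab.
have hc : (0 < c)%N by exact: leq_trans hb hbc.
set S := G n m (PS a b c); set C := G n m (PC a b c).
set Q := G n m (PQ a b c); set D := G n m (PD a b c).
set L1 := Lk m 1; set La := Lk m a; set Lb := Lk m b; set Lc := Lk m c.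
have EQ : forall p q, tr n m p = tr n m q -> Zt n m (p + - q).
  by move=> p q; apply: eqvP.
have Fk : forall k, Zt n m ((1 - xv) * Lk m k + - (tv * xv ^+ k)).
  by move=> k; apply: EQ; apply: FL.
have E1 : Zt n m (S + Lb * Q + - (Lb * (La * Lc) + L1 * S)).
  apply: EQ; rewrite !tr_add base3 // !shiftG // !trG.
  by apply: G_add4 => w Hw; apply: pw1.
have E2 : Zt n m (C + Lc * Q + - (Lc * (La * Lc) + Lc * S)).
  apply: EQ; rewrite !tr_add base3 // !shiftG // !trG.
  by apply: G_add4 => w Hw; apply: pw2.
have E3 : Zt n m (Q + Lb * D + - (Lb * (Lc * Lc) + La * C)).
  apply: EQ; rewrite !tr_add base3 // !shiftG // !trG.
  by apply: G_add4 => w Hw; apply: pw3.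
have E4 : Zt n m (D + Lc * D + - (Lc * (Lc * Lc) + Lc * C)).
  apply: EQ; rewrite !tr_add base3 // !shiftG // !trG.
  by apply: G_add4 => w Hw; apply: pw4.
have Hv : Zt n m ((1 - xv) * (\sum_(i < m.+1) xv ^+ i) + - 1).
  apply: EQ; rewrite geo tr_add tr_opp trXn_x oppr0 addr0 //.
have Hw : Zt n m ((1 + Lc) * (\sum_(i < n.+1) (- Lc) ^+ i) + - 1).
  apply: EQ; rewrite -[Lc in 1 + Lc]opprK geo tr_add tr_opp.
  rewrite exprNn /Lc /Lk exprMn mulrCA trXn_t oppr0 addr0 //.
have Hgm : (1 - xv) * geomx (b - a) = 1 - xv ^+ (b - a) by rewrite geo.
have Fb : Zt n m ((1 - xv) * Lb + - (tv * (xv ^+ a * xv ^+ (b - a)))).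
  by rewrite -exprD subnKC ?(ltnW hab) //; apply: Fk.
have HD : denS a b c = (1 - xv - tv * xv) * ((1 - xv) * (1 - xv) + tv * xv ^+ c * (1 - xv)
           + tv * tv * (xv ^+ a * xv ^+ c) + tv * tv * tv * (xv ^+ a * xv ^+ c * xv ^+ c)
             * geomx (b - a)) + numS a b c.
  by rewrite /denS /psi !expr2 exprS expr2 mul2n -addnn !exprD ?mulrA.
have HN : numS a b c = tv * tv * tv * (xv ^+ a * (xv ^+ a * xv ^+ (b - a)) * xv ^+ c)
           * (1 + tv * xv ^+ c * geomx (b - a)).
  have Hxb : xv ^+ b = xv ^+ a * xv ^+ (b - a) by rewrite -exprD subnKC // ltnW.
  by rewrite /numS exprS expr2 !exprD Hxb ?mulrA.
have := @abs_main PP 0 1 +%R *%R -%R PRth (Zt n m) (Zt0 n m) (@Zt_add n m) (@Zt_mul n m)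
  xv tv (xv ^+ a) (xv ^+ c) (xv ^+ (b - a)) (geomx (b - a)) S C Q D L1 La Lb Lc
  _ _ Hv Hw Hgm (Fk 1%N) (Fk a) Fb (Fk c) E1 E2 E3 E4 _ _ HD HN.
rewrite /eqv /Zt tr_add tr_opp => /eqP; rewrite subr_eq0 => /eqP H.
have := f_equal (fun p => coef2 p n m) H; rewrite /= !coef2_tr !leqnn /= => <-.
rewrite coef2M; apply: eq_bigr => i _; apply: eq_bigr => j _.
by rewrite coef2_G !leq_subr /= Scoef_cnt.
Qed.
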